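(* Let $G$ be a finite graph with positive weights $w$ on its edges. For $i=1,\dots,k$ let $H_i$ be a subgraph of $G$ with positive weights $w_i$ on its edges, such that (i) there is a constant $m$ with $|\{i: x\in V(H_i)\}|=m$ for every $x\in V(G)$; and (ii) for every $e\in E(G)$, $w(e)\ge \frac1m\sum_{i:\,e\in E(H_i)} w_i(e)$. Then for all $t>0$, $$\frac{1}{|G|}\sum_{x\in V(G)}p_t(x;G)\le \frac{1}{\sum_{j=1}^k|H_j|}\sum_{i=1}^k\sum_{x\in V(H_i)}p_t(x;H_i).$$
   Context: For a graph $K$ with positive edge weights, its Laplacian $\Delta_K$ has off-diagonal entries $\Delta_K(x,y)=-w(e)$ when $e$ is the edge joining $x$ and $y$ with weight $w(e)$, all other off-diagonal entries $0$, and row sums $0$. $p_t(x;K)$, the probability that continuous-time random walk on the weighted graph $K$ started at $x$ is at $x$ at time $t$, is the $(x,x)$-entry of $e^{-t\Delta_K}$ (with $\Delta_{H_i}$ formed using the weights $w_i$). $|K|$ is the number of vertices. *)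

(* Defs.v *)
From HB Require Import structures.
From mathcomp Require Import all_boot all_order all_algebra.
From mathcomp Require Import all_classical all_reals all_analysis.
Set Implicit Arguments. Unset Strict Implicit. Unset Printing Implicit Defensive.
Import Order.TTheory GRing.Theory Num.Theory.
Local Open Scope ring_scope.

Section Heat.
Variable R : realType.

Definition mxid (T : finType) : T -> T -> R := fun x y => if x == y then 1 else 0.
Definition mxmul (T : finType) (A B : T -> T -> R) : T -> T -> R :=
  fun x y => \sum_(z : T) A x z * B z y.
Fixpoint mxpow (T : finType) (A : T -> T -> R) (n : nat) : T -> T -> R :=
  match n with O => @mxid T | S n => mxmul A (mxpow A n) end.

Definition wadj (T : finType) (E : rel T) (w : T -> T -> R) : T -> T -> R :=
  fun x y => if E x y then w x y else 0.

Definition laplacian (T : finType) (a : T -> T -> R) : T -> T -> R :=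
  fun x y => if x == y then \sum_(z | z != x) a x z else - a x y.

(* (x,x) entry of exp(-t L) via its defining power series, entrywise. *)
Definition heat_diag (T : finType) (a : T -> T -> R) (t : R) (x : T) : R :=
  limn (fun N : nat => \sum_(k < N) ((- t) ^+ k / (k`!)%:R) * mxpow (laplacian a) k x x).

Definition pt (T : finType) (E : rel T) (w : T -> T -> R) (t : R) (x : T) : R :=
  heat_diag (wadj E w) t x.

End Heat.

Definition subV (V : finType) (S : {set V}) : finType := {x : V | x \in S}.

Definition sub_rel (V : finType) (S : {set V}) (EH : rel V) : rel (subV S) :=
  fun a b => EH (val a) (val b).
Definition sub_w (R : realType) (V : finType) (S : {set V}) (wH : V -> V -> R)
  : subV S -> subV S -> R := fun a b => wH (val a) (val b).

(* Main.v *)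
Require Import Defs.
From HB Require Import structures.
From mathcomp Require Import all_boot all_order all_algebra.
From mathcomp Require Import all_classical all_reals all_analysis.
From mathcomp Require Import complex sesquilinear spectral.
From mathcomp Require Import ring lra.
Set Implicit Arguments. Unset Strict Implicit. Unset Printing Implicit Defensive.
Import Order.TTheory GRing.Theory Num.Theory numFieldNormedType.Exports.
Local Open Scope ring_scope.

Section Spec.
Local Open Scope sesquilinear_scope.
Variable R : realType.
Local Notation C := R[i].
Local Notation rC := (real_complex R).

Lemma rC_conj (x : R) : (rC x)^* = rC x.
Proof. apply: conj_Creal; apply/complex_realP; by exists x. Qed.

Variable T : finType.
Section SpT.
Variable M : T -> T -> R.
Hypothesis Msym : forall x y, M x y = M y x.

Lemma sum_rank (F : 'I_#|T| -> C) : \sum_(x : T) F (enum_rank x) = \sum_(i < #|T|) F i.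
Proof. by rewrite (reindex (@enum_rank T)) //; apply: onW_bij; apply: enum_rank_bij. Qed.

Lemma spectral_T : exists (lam : 'I_#|T| -> R) (u : 'I_#|T| -> T -> C),
  [/\ forall j k, \sum_x (u j x)^* * u k x = (j == k)%:R,
      forall x y, \sum_j u j x * (u j y)^* = (x == y)%:R &
      forall x y, rC (M x y) = \sum_j rC (lam j) * u j x * (u j y)^*].
Proof.
pose A : 'M[C]_#|T| := \matrix_(i, j) rC (M (enum_val i) (enum_val j)).
have AtC : A ^t* = A.
  by apply/matrixP => i j; rewrite !mxE rC_conj Msym.
have Aherm : A \is hermsymmx by apply/is_hermitianmxP; rewrite expr0 scale1r AtC.
have Anorm := hermitian_normalmx Aherm.
have Areal := hermitian_spectral_diag_real Aherm.
have /orthomx_spectralP AE := Anorm.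
set P := spectralmx A in AE; set d := spectral_diag A in AE Areal.
have Pu : P \is unitarymx by apply: spectral_unitarymx.
have PPt : P *m P ^t* = 1%:M by apply/unitarymxP.
have PtP : P ^t* *m P = 1%:M.
  by rewrite -invmx_unitary // mulVmx // unitarymx_unit.
rewrite invmx_unitary // in AE.
exists (fun l => complex.Re (d 0 l)), (fun l x => (P l (enum_rank x))^*).
split.
- move=> j k /=; under eq_bigr do rewrite conjCK.
  rewrite (sum_rank (fun i => P j i * (P k i)^*)).
  move/matrixP: PPt => /(_ j k); rewrite !mxE => <-.
  by apply: eq_bigr => i _; rewrite !mxE.
- move=> x y /=; under eq_bigr do rewrite conjCK.
  move/matrixP: PtP => /(_ (enum_rank x) (enum_rank y)); rewrite !mxE.
  rewrite (inj_eq enum_rank_inj) => <-.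
  by apply: eq_bigr => i _; rewrite !mxE.
- move=> x y /=.
  move/matrixP: AE => /(_ (enum_rank x) (enum_rank y)).
  rewrite mul_mx_diag !mxE !enum_rankK => ->.
  apply: eq_bigr => l _; rewrite !mxE.
  have : d 0 l \is Num.real by move/mxOverP: Areal; apply.
  by move/RRe_real => ->; rewrite conjCK [_ * d 0 l]mulrC.
Qed.
End SpT.


Definition nrm (z : C) : R := complex.Re (z * z^*).

Lemma ReD (x y : C) : complex.Re (x + y) = complex.Re x + complex.Re y.
Proof. by case: x; case: y. Qed.

Lemma Re_sum (I : Type) (r : seq I) (P : pred I) (F : I -> C) :
  complex.Re (\sum_(i <- r | P i) F i) = \sum_(i <- r | P i) complex.Re (F i).
Proof. by apply: (big_morph _ ReD). Qed.

Lemma Re_rCM (r : R) (z : C) : complex.Re (rC r * z) = r * complex.Re z.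
Proof. by case: z => a b /=; rewrite mul0r subr0. Qed.

Lemma Re_rC (r : R) : complex.Re (rC r) = r.
Proof. by []. Qed.

Lemma Re_nat (n : nat) : complex.Re (n%:R : C) = n%:R.
Proof. by elim: n => // n IH; rewrite -addn1 !natrD ReD IH. Qed.

Lemma nrm_ge0 (z : C) : 0 <= nrm z.
Proof. by have := mulcJ_ge0 z; rewrite lecE => /andP[]. Qed.

Section Data.
Variables (J : finType) (M : T -> T -> R) (lam : J -> R) (u : J -> T -> C).
Hypothesis Hon : forall j k, \sum_x (u j x)^* * u k x = (j == k)%:R.
Hypothesis Hco : forall x y, \sum_j u j x * (u j y)^* = (x == y)%:R.
Hypothesis Hdec : forall x y, rC (M x y) = \sum_j rC (lam j) * u j x * (u j y)^*.

Definition coef (f : T -> C) j := \sum_x (u j x)^* * f x.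

Lemma gen_quad (c : J -> C) f :
  \sum_j c j * (coef f j * (coef f j)^*)
  = \sum_x \sum_y (f x)^* * f y * (\sum_j c j * u j x * (u j y)^*).
Proof.
transitivity (\sum_j \sum_y \sum_x c j * ((u j y)^* * f y * ((u j x)^*^* * (f x)^*))).
  apply: eq_bigr => j _; rewrite /coef rmorph_sum big_distrlr mulr_sumr.
  by apply: eq_bigr => y _; rewrite mulr_sumr; apply: eq_bigr => x _; rewrite rmorphM.
under eq_bigr do rewrite exchange_big /=.
rewrite exchange_big /=; apply: eq_bigr => x _.
rewrite exchange_big /=; apply: eq_bigr => y _.
rewrite mulr_sumr; apply: eq_bigr => j _; rewrite conjCK; ring.
Qed.

Lemma sum_delta (F : T -> C) x : \sum_y F y * (x == y)%:R = F x.
Proof.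
rewrite (bigD1 x) //= eqxx mulr1 big1 ?addr0 // => y /negPf.
by rewrite eq_sym => ->; rewrite mulr0.
Qed.

Lemma sum_deltaJ (F : J -> C) j : \sum_l F l * (l == j)%:R = F j.
Proof.
rewrite (bigD1 j) //= eqxx mulr1 big1 ?addr0 // => l /negPf ->.
by rewrite mulr0.
Qed.

Lemma parseval f : \sum_j coef f j * (coef f j)^* = \sum_x (f x)^* * f x.
Proof.
transitivity (\sum_j (fun _ => 1 : C) j * (coef f j * (coef f j)^*)).
  by apply: eq_bigr => j _; rewrite mul1r.
rewrite gen_quad; apply: eq_bigr => x _.
under eq_bigr do (under eq_bigr do rewrite mul1r; rewrite Hco).
by rewrite (sum_delta (fun y => (f x)^* * f y)).
Qed.

Lemma quad_spec f : \sum_j rC (lam j) * (coef f j * (coef f j)^*)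
  = \sum_x \sum_y rC (M x y) * ((f x)^* * f y).
Proof.
rewrite gen_quad; apply: eq_bigr => x _; apply: eq_bigr => y _.
by rewrite Hdec mulrC.
Qed.

Lemma eig_quad j : \sum_x \sum_y rC (M x y) * ((u j x)^* * u j y) = rC (lam j).
Proof.
rewrite -quad_spec.
have cj l : coef (u j) l = (l == j)%:R by rewrite /coef Hon.
under eq_bigr do rewrite cj.
rewrite (bigD1 j) //= eqxx big1 ?addr0.
  by rewrite (_ : true%:R = 1 :> C) // rmorph1 !mulr1.
by move=> l /negPf ->; rewrite mul0r mulr0.
Qed.

Lemma pow_spec k x y : rC (mxpow M k x y) = \sum_j rC (lam j) ^+ k * u j x * (u j y)^*.
Proof.
elim: k x y => [|k IH] x y /=.
  under eq_bigr do rewrite expr0 mul1r; rewrite Hco /mxid.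
  by case: (x == y); rewrite ?rmorph1 ?rmorph0.
rewrite /mxmul rmorph_sum /=.
transitivity (\sum_z \sum_l \sum_j (rC (lam l) * u l x * (u l z)^*) *
                (rC (lam j) ^+ k * u j z * (u j y)^*)).
  by apply: eq_bigr => z _; rewrite rmorphM /= Hdec IH big_distrlr.
rewrite exchange_big /=.
transitivity (\sum_l \sum_j (rC (lam l) * u l x * (rC (lam j) ^+ k * (u j y)^*)) *
                (l == j)%:R).
  apply: eq_bigr => l _; rewrite exchange_big /=; apply: eq_bigr => j _.
  rewrite -Hon mulr_sumr; apply: eq_bigr => z _; ring.
apply: eq_bigr => l _.
rewrite (bigD1 l) //= eqxx mulr1 big1 ?addr0; first by rewrite exprS; ring.
by move=> j /negPf; rewrite eq_sym => ->; rewrite mulr0.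
Qed.

Lemma diag_pow k x : mxpow M k x x = \sum_j lam j ^+ k * nrm (u j x).
Proof.
rewrite -[LHS]Re_rC pow_spec Re_sum; apply: eq_bigr => j _.
by rewrite -rmorphXn -mulrA Re_rCM.
Qed.

Lemma sum_nrm j : \sum_x nrm (u j x) = 1.
Proof.
rewrite /nrm -Re_sum.
under eq_bigr do rewrite mulrC.
by rewrite Hon eqxx.
Qed.

End Data.

Lemma lap_quad (a : T -> T -> R) (asym : forall x y, a x y = a y x) (f : T -> C) :
  2 * complex.Re (\sum_x \sum_y rC (laplacian a x y) * ((f x)^* * f y))
  = \sum_x \sum_y a x y * nrm (f x - f y).
Proof.
have E1 : \sum_x \sum_y rC (laplacian a x y) * ((f x)^* * f y)
        = \sum_x \sum_y rC (a x y) * ((f x)^* * (f x - f y)).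
  apply: eq_bigr => x _.
  rewrite (bigD1 x) //= [RHS](bigD1 x) //= /laplacian eqxx subrr !mulr0 add0r.
  rewrite rmorph_sum big_distrl /= -big_split /=.
  apply: eq_bigr => i /negPf; rewrite eq_sym => ->; rewrite rmorphN /=; ring.
have E2 : \sum_x \sum_y rC (a x y) * ((f x)^* * (f x - f y))
        = \sum_x \sum_y rC (a x y) * ((f y)^* * (f y - f x)).
  rewrite exchange_big /=; apply: eq_bigr => x _; apply: eq_bigr => y _.
  by rewrite asym.
rewrite E1 mulr2n mulrDl mul1r -ReD {2}E2 -big_split /= Re_sum.
apply: eq_bigr => x _; rewrite -big_split /= Re_sum; apply: eq_bigr => y _.
rewrite -Re_rCM /nrm rmorphB /=; congr complex.Re; ring.
Qed.

End Spec.

Section H.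
Variable R : realType.

Lemma cvg_bigsum (I : Type) (r : seq I) (f : I -> nat -> R) (l : I -> R) :
  (forall i, (f i n @[n --> \oo] --> l i)%classic) ->
  ((\sum_(i <- r) f i n) @[n --> \oo] --> \sum_(i <- r) l i)%classic.
Proof.
move=> H; elim: r => [|i r IH].
  rewrite big_nil; under eq_fun do rewrite big_nil. exact: cvg_cst.
rewrite big_cons; under eq_fun do rewrite big_cons. exact: cvgD.
Qed.

Lemma series_expR (x : R) : (series (exp_coeff x) n @[n --> \oo] --> expR x)%classic.
Proof. exact: is_cvg_series_exp_coeff. Qed.

Lemma heat_formula (T J : finType) (a : T -> T -> R) (lam : J -> R) (c : J -> T -> R)
   (t : R) (x : T) :
  (forall k, mxpow (laplacian a) k x x = \sum_j lam j ^+ k * c j x) ->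
  heat_diag a t x = \sum_j c j x * expR (- t * lam j).
Proof.
move=> Hk; rewrite /heat_diag.
have -> : (fun N : nat => \sum_(k < N) ((- t) ^+ k / (k`!)%:R) * mxpow (laplacian a) k x x)
   = (fun N => \sum_j c j x * series (exp_coeff (- t * lam j)) N).
  apply: funext => N; under eq_bigr do rewrite Hk big_distrr.
  rewrite exchange_big /=; apply: eq_bigr => j _.
  rewrite /series /= big_mkord big_distrr /=; apply: eq_bigr => k _.
  rewrite exp_coeffE /= exprMn; lra.
apply: cvg_lim => //; apply: cvg_bigsum => j.
apply: cvgMl_tmp; exact: series_expR.
Qed.
End H.

Section I.
Variable R : realType.

Lemma ln_tangent (p q : R) : 0 < p -> 0 < q -> p * (ln q - ln p) <= q - p.
Proof.
move=> p0 q0.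
have qp0 : 0 < q / p by rewrite divr_gt0.
have := @le_ln1Dx R (q / p - 1); rewrite [1 + _]addrC subrK.
have -> : ln (q / p) = ln q - ln p by rewrite ln_div // posrE.
move=> /(_ ltac:(lra)) H.
have := ler_wpM2l (ltW p0) H.
have -> : p * (q / p - 1) = q - p by field; rewrite gt_eqF.
done.
Qed.

Lemma exp_tangent (b q : R) : 0 < q -> q * (1 + b - ln q) <= expR b.
Proof.
move=> q0.
have := expR_ge1Dx (b - ln q); rewrite expRB lnK ?posrE // addrA => H.
have := ler_wpM2l (ltW q0) H.
by rewrite [q * (expR b / q)]mulrC divfK ?gt_eqF.
Qed.

Lemma per_block (S J : finType) (lam : J -> R) (mu : S -> R) (beta : S -> J -> R) (t : R) :
  (forall s j, 0 <= beta s j) -> (forall s, \sum_j beta s j = 1) ->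
  \sum_j expR (- t * lam j) * (\sum_s beta s j)
  - t * \sum_j expR (- t * lam j) * (\sum_s mu s * beta s j)
  + t * \sum_j expR (- t * lam j) * lam j * (\sum_s beta s j)
  <= \sum_s expR (- t * mu s).
Proof.
move=> b0 b1.
pose p j := expR (- t * lam j).
pose q s := \sum_j p j * beta s j.
have p0 j : 0 < p j by apply: expR_gt0.
have q0 s : 0 < q s.
  case: (pickP (fun j => 0 < beta s j)) => [j bj|H]; last first.
    have : \sum_j beta s j = 0.
      apply: big1 => j _; have := H j; rewrite /= lt_def b0 andbT => /negbFE/eqP.
      by [].
    by rewrite b1 => /eqP; rewrite oner_eq0.
  apply: (lt_le_trans (mulr_gt0 (p0 j) bj)); rewrite /q (bigD1 j) //= lerDl.
  by apply: sumr_ge0 => i _; apply: mulr_ge0 (ltW (p0 i)) (b0 s i).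
have pt s : q s - t * (mu s * q s) + t * \sum_j beta s j * (p j * lam j) <= expR (- t * mu s).
  apply: le_trans (exp_tangent (- t * mu s) (q0 s)).
  suff : \sum_j beta s j * (t * (p j * lam j)) <= - q s * ln (q s).
    under eq_bigr do rewrite mulrCA; rewrite -mulr_sumr. lra.
  set Q := q s.
  have HQ : Q = \sum_j p j * beta s j by [].
  have E : \sum_j beta s j * (Q - p j - p j * ln Q) = - Q * ln Q.
    transitivity (\sum_j (Q * beta s j - p j * beta s j - ln Q * (p j * beta s j))).
      by apply: eq_bigr => j _; ring.
    rewrite !sumrB -!big_distrr /= -HQ b1; ring.
  rewrite -E; apply: ler_sum => j _; apply: (ler_wpM2l (b0 s j)).
  have lp : ln (p j) = - t * lam j by rewrite /p expRK.
  have := ln_tangent (p0 j) (q0 s); rewrite lp -/Q; lra.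
apply: le_trans (ler_sum _ (fun s _ => pt s)).
have L1 : \sum_j p j * (\sum_s beta s j) = \sum_s q s.
  by rewrite /q exchange_big /=; apply: eq_bigr => j _; rewrite big_distrr.
have L2 : \sum_j p j * (\sum_s mu s * beta s j) = \sum_s mu s * q s.
  rewrite /q; under [RHS]eq_bigr do rewrite big_distrr; rewrite exchange_big /=.
  by apply: eq_bigr => j _; rewrite big_distrr; apply: eq_bigr => s _ /=; ring.
have L3 : \sum_j p j * lam j * (\sum_s beta s j) = \sum_s \sum_j beta s j * (p j * lam j).
  rewrite exchange_big /=.
  by apply: eq_bigr => j _; rewrite big_distrr; apply: eq_bigr => s _ /=; ring.
rewrite L1 L2 L3 !big_split /= sumrN -!mulr_sumr.
by [].
Qed.
End I.

Section Sub.
Variables (R : realType) (V : finType) (S : {set V}).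
Local Notation C := R[i].

Definition ext (h : subV S -> C) : V -> C := fun x =>
  match (insub x : option (subV S)) with Some a => h a | None => 0 end.

Lemma ext_val h (a : subV S) : ext h (val a) = h a.
Proof. by rewrite /ext valK. Qed.

Lemma sum_ext (G : V -> C) h : \sum_x G x * ext h x = \sum_(a : subV S) G (val a) * h a.
Proof.
rewrite (bigID (mem S)) /= [X in _ + X]big1 ?addr0.
  by rewrite (big_sub (mem S)) /=; apply: eq_bigr => a _; rewrite ext_val.
by move=> x xS; rewrite /ext insubN ?mulr0.
Qed.

Lemma nrm_conj (z : C) : nrm z^* = nrm z.
Proof. by rewrite /nrm conjCK mulrC. Qed.

End Sub.

Unset Implicit Arguments.

Theorem theorem4p2 (R : realType) (V : finType) (E : rel V) (w : V -> V -> R)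
  (k : nat) (VH : 'I_k -> {set V}) (EH : 'I_k -> rel V) (wH : 'I_k -> V -> V -> R)
  (m : nat) (t : R) :
  (* G is a finite simple graph with positive symmetric edge weights *)
  irreflexive E -> symmetric E ->
  (forall x y, E x y -> 0 < w x y) -> (forall x y, E x y -> w x y = w y x) ->
  (* each H_i is a subgraph of G with positive symmetric edge weights *)
  (forall i x y, EH i x y -> [/\ E x y, x \in VH i & y \in VH i]) ->
  (forall i, symmetric (EH i)) ->
  (forall i x y, EH i x y -> 0 < wH i x y) ->
  (forall i x y, EH i x y -> wH i x y = wH i y x) ->
  (* (i) *)
  (0 < m)%N ->
  (forall x : V, #|[set i | x \in VH i]| = m) ->
  (* (ii) *)
  (forall x y, E x y -> w x y >= (m%:R)^-1 * \sum_(i | EH i x y) wH i x y) ->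
  0 < t ->
  (#|V|%:R)^-1 * \sum_(x : V) pt E w t x
    <= (\sum_(j < k) #|VH j|%:R)^-1 *
       \sum_(i < k) \sum_(a : subV (VH i)) pt (@sub_rel V (VH i) (EH i)) (@sub_w R V (VH i) (wH i)) t a.
Proof.
move=> Eirr Esym wpos wsym Hsub EHsym wHpos wHsym m0 Hcov Hw t0.
pose a := wadj E w.
have asym x y : a x y = a y x.
  rewrite /a /wadj Esym; case Exy: (E y x) => //; apply: wsym; by rewrite Esym.
have Lsym x y : laplacian a x y = laplacian a y x.
  by rewrite /laplacian eq_sym; case: eqP => [->|_] //; rewrite asym.
have [lam [v [Hon Hco Hdec]]] := spectral_T Lsym.
pose p j := expR (- t * lam j).
have G_trace : \sum_x pt E w t x = \sum_j p j.
  transitivity (\sum_x \sum_j nrm (v j x) * p j).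
    apply: eq_bigr => x _; rewrite /pt; apply: (@heat_formula R V _ a lam (fun j x => nrm (v j x))) => kk.
    exact: (diag_pow Hon Hco Hdec).
  rewrite exchange_big /=; apply: eq_bigr => j _.
  by rewrite -big_distrl /= (sum_nrm Hon) mul1r.
pose ai i := wadj (@sub_rel V (VH i) (EH i)) (@sub_w R V (VH i) (wH i)).
have aisym i b c : ai i b c = ai i c b.
  rewrite /ai /wadj /sub_rel /sub_w EHsym; case H: (EH i _ _) => //.
  by apply: wHsym; rewrite EHsym.
have Lisym i b c : laplacian (ai i) b c = laplacian (ai i) c b.
  by rewrite /laplacian eq_sym; case: eqP => [->|_] //; rewrite aisym.
pose B1 i j := \sum_(b : subV (VH i)) nrm (v j (val b)).
pose B2 i j := complex.Re (\sum_(b : subV (VH i)) \sum_(c : subV (VH i))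
   real_complex R (laplacian (ai i) b c) * ((v j (val b))^* * v j (val c))).
have block i : \sum_j p j * B1 i j - t * \sum_j p j * B2 i j
    + t * \sum_j p j * lam j * B1 i j
  <= \sum_(b : subV (VH i)) pt (@sub_rel V (VH i) (EH i)) (@sub_w R V (VH i) (wH i)) t b.
  have [mu [u [Hon' Hco' Hdec']]] := spectral_T (Lisym i).
  have Htr : \sum_(b : subV (VH i)) pt (@sub_rel V (VH i) (EH i)) (@sub_w R V (VH i) (wH i)) t b
      = \sum_s expR (- t * mu s).
    transitivity (\sum_b \sum_s nrm (u s b) * expR (- t * mu s)).
      apply: eq_bigr => b _; rewrite /pt.
      apply: (@heat_formula R _ _ (ai i) mu (fun s b => nrm (u s b))) => kk.
      exact: (diag_pow Hon' Hco' Hdec').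
    rewrite exchange_big /=; apply: eq_bigr => s _.
    by rewrite -big_distrl /= (sum_nrm Hon') mul1r.
  rewrite Htr.
  pose f j := fun b : subV (VH i) => v j (val b).
  pose beta s j := nrm (coef u (f j) s).
  have b0 s j : 0 <= beta s j by apply: nrm_ge0.
  have b1 s : \sum_j beta s j = 1.
    have E1 j : beta s j = nrm (coef v (ext (u s)) j).
      rewrite /beta -[LHS]nrm_conj /coef rmorph_sum /= sum_ext; congr nrm.
      by apply: eq_bigr => b _; rewrite rmorphM /= conjCK mulrC.
    under eq_bigr do rewrite E1.
    rewrite /nrm -Re_sum (parseval Hco) (sum_ext (fun x => (ext (u s) x)^*)).
    under eq_bigr do rewrite ext_val.
    by rewrite Hon' eqxx.
  have S1 j : \sum_s beta s j = B1 i j.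
    rewrite /beta /nrm -Re_sum (parseval Hco') /B1 Re_sum.
    by apply: eq_bigr => b _; rewrite mulrC.
  have S2 j : \sum_s mu s * beta s j = B2 i j.
    rewrite /B2 -(quad_spec Hdec') Re_sum; apply: eq_bigr => s _.
    by rewrite Re_rCM.
  have PB := per_block lam mu t b0 b1.
  apply: le_trans PB.
  have -> : \sum_j expR (- t * lam j) * \sum_s beta s j = \sum_j p j * B1 i j.
    by apply: eq_bigr => j _; rewrite S1.
  have -> : \sum_j expR (- t * lam j) * \sum_s mu s * beta s j = \sum_j p j * B2 i j.
    by apply: eq_bigr => j _; rewrite S2.
  have -> : \sum_j expR (- t * lam j) * lam j * \sum_s beta s j = \sum_j p j * lam j * B1 i j.
    by apply: eq_bigr => j _; rewrite S1.
  by [].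
have cnt x : \sum_(i | x \in VH i) (1 : R) = m%:R.
  by rewrite sumr_const -(Hcov x) cardsE.
have SB1 j : \sum_i B1 i j = m%:R.
  transitivity (\sum_i \sum_x (if x \in VH i then nrm (v j x) else 0)).
    by apply: eq_bigr => i _; rewrite -big_mkcond /= (big_sub (mem (VH i))).
  rewrite exchange_big /=.
  transitivity (\sum_x (m%:R * nrm (v j x))).
    apply: eq_bigr => x _; rewrite -big_mkcond /= -(cnt x) big_distrl /=.
    by apply: eq_bigr => i _; rewrite mul1r.
  by rewrite -big_distrr /= (sum_nrm Hon) mulr1.
have g0 i x y : (x \notin VH i) || (y \notin VH i) -> wadj (EH i) (wH i) x y = 0.
  rewrite /wadj; case H: (EH i x y) => //; case/Hsub: H => _ -> ->.
  by [].
have W2 i j : 2 * B2 i j = \sum_x \sum_y wadj (EH i) (wH i) x y * nrm (v j x - v j y).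
  rewrite /B2 (lap_quad (aisym i) (fun b => v j (val b))) /=.
  rewrite (bigID (mem (VH i))) /= [X in _ + X]big1 ?addr0; last first.
    by move=> x xn; apply: big1 => y _; rewrite g0 ?xn ?mul0r.
  rewrite (big_sub (mem (VH i))) /=; apply: eq_bigr => b _.
  rewrite (bigID (mem (VH i))) /= [X in _ + X]big1 ?addr0; last first.
    by move=> y yn; rewrite g0 ?yn ?orbT ?mul0r.
  by rewrite (big_sub (mem (VH i))).
have L2 j : 2 * lam j = \sum_x \sum_y a x y * nrm (v j x - v j y).
  by rewrite -(lap_quad asym (v j)) (eig_quad Hon Hdec) Re_rC.
have mpos : 0 < m%:R :> R by rewrite ltr0n.
have SB2 j : \sum_i B2 i j <= m%:R * lam j.
  suff : 2 * \sum_i B2 i j <= 2 * (m%:R * lam j) by rewrite ler_pM2l.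
  rewrite mulr_sumr; under eq_bigr do rewrite W2.
  rewrite mulrCA L2 mulr_sumr exchange_big /=; apply: ler_sum => x _.
  rewrite exchange_big /= mulr_sumr; apply: ler_sum => y _.
  rewrite -big_distrl /= mulrA; apply: ler_wpM2r; first exact: nrm_ge0.
  rewrite /wadj -big_mkcond /= /a /wadj; case Exy: (E x y); last first.
    rewrite big1 ?mulr0 // => i EHi.
    by case/Hsub: EHi; rewrite Exy.
  have := Hw x y Exy.
  rewrite -{2}(mulVKf (lt0r_neq0 mpos) (\sum_(i | EH i x y) wH i x y)).
  move=> H; apply: ler_wpM2l => //; exact: ltW.
have Hsum : m%:R * \sum_j p j <= \sum_i \sum_(b : subV (VH i))
     pt (@sub_rel V (VH i) (EH i)) (@sub_w R V (VH i) (wH i)) t b.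
  apply: le_trans (ler_sum _ (fun i _ => block i)).
  rewrite !big_split /= sumrN -!mulr_sumr.
  have e1 : \sum_i \sum_j p j * B1 i j = m%:R * \sum_j p j.
    rewrite exchange_big /= mulr_sumr; apply: eq_bigr => j _.
    by rewrite -mulr_sumr SB1 mulrC.
  have e3 : \sum_i \sum_j p j * lam j * B1 i j = m%:R * \sum_j p j * lam j.
    rewrite exchange_big /= mulr_sumr; apply: eq_bigr => j _.
    by rewrite -mulr_sumr SB1 mulrC.
  have e2 : \sum_i \sum_j p j * B2 i j <= m%:R * \sum_j p j * lam j.
    rewrite exchange_big /= mulr_sumr; apply: ler_sum => j _.
    rewrite -mulr_sumr mulrCA; apply: ler_wpM2l; first exact: ltW (expR_gt0 _).
    exact: SB2.
  rewrite e1 e3; have := ler_wpM2l (ltW t0) e2; lra.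
have Hden : \sum_(j < k) #|VH j|%:R = m%:R * #|V|%:R :> R.
  transitivity (\sum_(j < k) \sum_x (if x \in VH j then 1 else 0 : R)).
    by apply: eq_bigr => j _; rewrite -big_mkcond /= sumr_const.
  rewrite exchange_big /=.
  transitivity (\sum_(x : V) (m%:R : R)).
    by apply: eq_bigr => x _; rewrite -big_mkcond /= cnt.
  by rewrite sumr_const mulr_natr.
rewrite G_trace Hden.
apply: le_trans (_ : (m%:R * #|V|%:R)^-1 * (m%:R * \sum_j p j) <= _).
  by rewrite invfM -mulrA mulrCA mulKf ?lt0r_neq0.
apply: ler_wpM2l; last exact: Hsum.
by rewrite invr_ge0 mulr_ge0 ?ler0n.
Qed.
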